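(* Let $\alpha\in\mathbb{R}$, let $\mathbb{Q}[x]^+_{x=\alpha}=\{p\in\mathbb{Q}[x]: p(\alpha)>0\}$, and suppose $\mathbb{Q}[x]^+_{x=\alpha}=H_1\sqcup H_2$ with $H_1,H_2$ disjoint nonempty subsets, each closed under addition and multiplication. Then for every $N\ge 2$ and $i=1,2$, the set $H_i\cap\mathbb{Q}[x]^{<N}$ is not contained in any proper $\mathbb{Q}$-linear subspace of $\mathbb{Q}[x]^{<N}$, where $\mathbb{Q}[x]^{<N}$ denotes the $\mathbb{Q}$-vector space of rational polynomials of degree less than $N$. *)

(* Defs.v *)
From HB Require Import structures.
From mathcomp Require Import all_boot all_order all_algebra.
From mathcomp Require Import reals.
Set Implicit Arguments. Unset Strict Implicit. Unset Printing Implicit Defensive.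
Import Order.TTheory GRing.Theory Num.Theory.
Local Open Scope ring_scope.

Definition qeval (R : realType) (alpha : R) (p : {poly rat}) : R :=
  (map_poly ratr p).[alpha].

Definition posAt (R : realType) (alpha : R) (p : {poly rat}) : Prop :=
  0 < qeval alpha p.

(* Q[x]^{<N}: polynomials of degree < N, i.e. size <= N. *)
Definition polyLt (N : nat) (p : {poly rat}) : Prop := (size p <= N)%N.

Definition lin_subspace (S : {poly rat} -> Prop) : Prop :=
  S 0 /\ (forall p q, S p -> S q -> S (p + q)) /\
  (forall (c : rat) p, S p -> S (c *: p)).

Definition proper_subspace_lt (N : nat) (S : {poly rat} -> Prop) : Prop :=
  lin_subspace S /\ (forall p, S p -> polyLt N p) /\
  (exists p, polyLt N p /\ ~ S p).

(* Main.v *)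
Require Import Defs.
From HB Require Import structures.
From mathcomp Require Import all_boot all_order all_algebra.
From mathcomp Require Import reals lra.
From Stdlib Require Import Classical.
Import Order.TTheory GRing.Theory Num.Theory.
Local Open Scope ring_scope.
Lemma qevalD (R : realType) (a : R) p q : qeval a (p + q) = qeval a p + qeval a q.
Proof. by rewrite /qeval rmorphD hornerD. Qed.
Lemma qevalB (R : realType) (a : R) p q : qeval a (p - q) = qeval a p - qeval a q.
Proof. by rewrite /qeval rmorphB hornerD hornerN. Qed.
Lemma qevalM (R : realType) (a : R) p q : qeval a (p * q) = qeval a p * qeval a q.
Proof. by rewrite /qeval rmorphM hornerM. Qed.
Lemma qevalC (R : realType) (a : R) c : qeval a c%:P = ratr c.
Proof. by rewrite /qeval map_polyC hornerC. Qed.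
Lemma qevalZ (R : realType) (a : R) c p : qeval a (c *: p) = ratr c * qeval a p.
Proof. by rewrite /qeval linearZ /= hornerZ. Qed.
Lemma qevalXsubC (R : realType) (a : R) c : qeval a ('X - c%:P) = a - ratr c.
Proof. by rewrite qevalB qevalC /qeval map_polyX hornerX. Qed.
Lemma qeval_rat (R : realType) p (c : rat) : qeval (ratr c : R) p = ratr p.[c].
Proof. by rewrite /qeval horner_map. Qed.

Lemma rat_btw (R : realType) (x y : R) : x < y -> exists q : rat, x < ratr q < y.
Proof. by move=> /rat_in_itvoo [q]; rewrite in_itv /=; exists q. Qed.
Lemma core (R : realType) (alpha : R) (A B : {poly rat} -> Prop)
 (hpart : forall p, posAt alpha p <-> (A p \/ B p))
 (hdisj : forall p, A p -> B p -> False)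
 (haddB : forall p q, B p -> B q -> B (p + q))
 (hmulB : forall p q, B p -> B q -> B (p * q))
 (hlin : forall p : {poly rat}, (size p <= 2)%N -> posAt alpha p -> B p) :
 forall n (p : {poly rat}), (size p <= n)%N -> posAt alpha p -> B p.
Proof.
elim=> [|n IH] p sp pp; first by apply: hlin => //; apply: leq_trans sp _.
case: (leqP (size p) 2) => [|s2]; first by move=> ?; apply: hlin.
case/hpart: (pp) => [Ap|//]; exfalso.
have [a /andP [ha1 ha2]] : exists a : rat, alpha - 1 < ratr a < alpha.
  by apply: rat_btw; lra.
set A0 := (ratr a : R) in ha1 ha2.
set hal := qeval alpha p.
have hpos : 0 < hal by [].
set hA := (ratr p.[a] : R).
have [eta /andP [he1 he2]] : exists eta : rat, 0 < (ratr eta : R) < hal.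
  by apply: rat_btw.
have aA : 0 < alpha - A0 by lra.
have [s /andP [hs1 hs2]] : exists s : rat,
   (ratr eta - hA)/(alpha - A0) < (ratr s : R) < (hal - hA)/(alpha - A0).
  apply: rat_btw; rewrite ltr_pM2r ?invr_gt0 //; lra.
rewrite ltr_pdivrMr // in hs1; rewrite ltr_pdivlMr // in hs2.
set l := s *: ('X - a%:P) + (p.[a] - eta)%:P.
have ql : qeval alpha l = ratr s * (alpha - A0) + hA - ratr eta.
  by rewrite /l qevalD qevalZ qevalXsubC qevalC rmorphB /= addrA.
have sl : (size l <= 2)%N.
  rewrite /l (leq_trans (size_polyD _ _)) // geq_max.
  by rewrite (leq_trans (size_scale_leq _ _)) ?size_XsubC // (leq_trans (size_polyC_leq1 _)).
have Bl : B l by apply: hlin => //; rewrite /posAt ql; lra.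
set g := p - l.
have qg : qeval alpha g = hal - qeval alpha l by rewrite /g qevalB.
have Ag : A g.
  have : posAt alpha g by rewrite /posAt qg ql; lra.
  case/hpart => // Bg; exfalso; apply: (hdisj p) => //.
  have -> : p = g + l by rewrite /g subrK.
  exact: haddB.
have ga : g.[a] = eta.
  by rewrite /g /l hornerD hornerN hornerD hornerZ hornerXsubC hornerC subrr mulr0 add0r opprB addrC subrK.
have : root (g - eta%:P) a by rewrite /root hornerD hornerN hornerC ga subrr.
case/factor_theorem => q gq.
have gE : g = q * ('X - a%:P) + eta%:P by rewrite -gq subrK.
have qq : qeval alpha q * (alpha - A0) = qeval alpha g - ratr eta.
  by rewrite gE qevalD qevalM qevalXsubC qevalC addrK.
have qpos : 0 < qeval alpha q.
  have : 0 < qeval alpha q * (alpha - A0) by rewrite qq qg ql; lra.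
  by rewrite pmulr_lgt0.
have q0 : q != 0 by apply: contraTneq qpos => ->; rewrite /qeval rmorph0 horner0 ltxx.
have sq : (size q <= n)%N.
  have : (size (g - eta%:P)%R <= n.+1)%N.
    rewrite (leq_trans (size_polyD _ _)) // geq_max size_polyN (leq_trans (size_polyC_leq1 _)) //.
    rewrite /g (leq_trans (size_polyD _ _)) // geq_max sp size_polyN (leq_trans sl) //.
    exact: ltnW (leq_trans s2 sp).
  by rewrite gq size_mul ?size_XsubC ?polyXsubC_eq0 // addn2.
have Bg : B g.
  rewrite gE; apply: haddB; last first.
    by apply: hlin; [exact: leq_trans (size_polyC_leq1 _) _ | rewrite /posAt qevalC].
  apply: hmulB; first exact: IH.
  by apply: hlin; [rewrite size_XsubC | rewrite /posAt qevalXsubC].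
exact: hdisj Ag Bg.
Qed.
Lemma base (R : realType) (alpha : R) (A B : {poly rat} -> Prop)
 (hpart : forall p, posAt alpha p <-> (A p \/ B p))
 (haddB : forall p q, B p -> B q -> B (p + q))
 (N : nat) (hN : (2 <= N)%N) (S : {poly rat} -> Prop)
 (hS : proper_subspace_lt N S) (hA : forall p, A p -> polyLt N p -> S p) :
 forall p : {poly rat}, (size p <= 2)%N -> posAt alpha p -> B p.
Proof.
case: hS => [[S0 [SD SZ]] [SN [p0 [lp0 nS0]]]].
have aux : forall p, polyLt N p -> posAt alpha p -> ~ S p -> B p.
  by move=> p lp pp nS; case/hpart: pp => // Ap; exfalso; apply: nS; apply: hA.
have [q [lq [pq nSq]]] : exists q, polyLt N q /\ posAt alpha q /\ ~ S q.
  case: (classic (S 1)) => S1; last first.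
    exists 1; split; first by rewrite /polyLt size_poly1; apply: leq_trans hN.
    by split => //; rewrite /posAt -polyC1 qevalC rmorph1 ltr01.
  have [k /andP [hk1 hk2]] : exists k : rat,
      - qeval alpha p0 < (ratr k : R) < - qeval alpha p0 + 1.
    by apply: rat_btw; lra.
  exists (p0 + k%:P); split.
    rewrite /polyLt (leq_trans (size_polyD _ _)) // geq_max lp0.
    by rewrite (leq_trans (size_polyC_leq1 _)) // (leq_trans _ hN).
  split; first by rewrite /posAt qevalD qevalC; lra.
  move=> Sq; apply: nS0.
  have -> : p0 = p0 + k%:P + (- k) *: 1 by rewrite alg_polyC polyCN addrK.
  by apply: SD => //; apply: SZ.
move=> p sp pp.
have lp : polyLt N p by apply: leq_trans sp hN.
case: (classic (S p)) => Sp; last exact: aux.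
have qpos : 0 < qeval alpha q by [].
have [e /andP [he1 he2]] : exists e : rat,
    0 < (ratr e : R) < qeval alpha p / qeval alpha q.
  by apply: rat_btw; rewrite divr_gt0.
rewrite ltr_pdivlMr // in he2.
have e0 : e != 0 by apply: contraTneq he1 => ->; rewrite rmorph0 ltxx.
have nS2 : ~ S (e *: q).
  move=> S2; apply: nSq.
  by rewrite -[q]scale1r -(mulVf e0) -scalerA; apply: SZ.
have nS1 : ~ S (p - e *: q).
  move=> S1; apply: nS2.
  have -> : e *: q = p + (-1) *: (p - e *: q) by rewrite scaleN1r opprB addrC subrK.
  by apply: SD => //; apply: SZ.
have -> : p = (p - e *: q) + e *: q by rewrite subrK.
apply: haddB; apply: aux => //.
- rewrite /polyLt (leq_trans (size_polyD _ _)) // geq_max lp size_polyN.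
  exact: leq_trans (size_scale_leq _ _) lq.
- by rewrite /posAt qevalB qevalZ; lra.
- exact: leq_trans (size_scale_leq _ _) lq.
- by rewrite /posAt qevalZ mulr_gt0.
Qed.

Theorem lemma4p5 (R : realType) (alpha : R)
  (H1 H2 : {poly rat} -> Prop)
  (hpart : forall p, posAt alpha p <-> (H1 p \/ H2 p))
  (hdisj : forall p, H1 p -> H2 p -> False)
  (hne1 : exists p, H1 p) (hne2 : exists p, H2 p)
  (hadd1 : forall p q, H1 p -> H1 q -> H1 (p + q))
  (hmul1 : forall p q, H1 p -> H1 q -> H1 (p * q))
  (hadd2 : forall p q, H2 p -> H2 q -> H2 (p + q))
  (hmul2 : forall p q, H2 p -> H2 q -> H2 (p * q)) :
  forall (N : nat), (2 <= N)%N ->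
  forall H, (H = H1 \/ H = H2) ->
  ~ (exists S : {poly rat} -> Prop,
       proper_subspace_lt N S /\ (forall p, H p -> polyLt N p -> S p)).
Proof.
move=> N hN H hH [S [hS hsub]].
case: hH => EH; subst H.
- have hlin := @base R alpha H1 H2 hpart hadd2 N hN S hS hsub.
  have all2 := @core R alpha H1 H2 hpart hdisj hadd2 hmul2 hlin.
  case: hne1 => p Hp.
  have pp : posAt alpha p by apply/hpart; left.
  exact: hdisj Hp (all2 _ p (leqnn _) pp).
- have hpart' : forall p, posAt alpha p <-> (H2 p \/ H1 p).
    by move=> p; rewrite hpart; tauto.
  have hdisj' : forall p, H2 p -> H1 p -> False by move=> p a b; exact: hdisj b a.
  have hlin := @base R alpha H2 H1 hpart' hadd1 N hN S hS hsub.
  have all1 := @core R alpha H2 H1 hpart' hdisj' hadd1 hmul1 hlin.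
  case: hne2 => p Hp.
  have pp : posAt alpha p by apply/hpart; right.
  exact: hdisj (all1 _ p (leqnn _) pp) Hp.
Qed.
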